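(* Let $(\mathfrak g,r)$ be a triangular Lie bialgebra with $r:\mathfrak g^*\to\mathfrak g$ invertible. For $\mu\in\mathbb R$ and $\kappa_1,\kappa_2\in\mathbb R$ with $\kappa_1\neq0$, $\kappa_2^2\neq1$, define linear maps on $\mathcal D(\mathfrak g)$ by $N_\mu(x,a^* )=(x,\mu r^{-1}(x)-a^* )$ and $N_{\kappa_1,\kappa_2}(x,a^* )=(\kappa_1r(a^* )+\kappa_2x,\ \frac{1-\kappa_2^2}{\kappa_1}r^{-1}(x)-\kappa_2a^* )$. Let $\tilde N_{\pm,\mu}=N_\mu\varphi^{-1}\pm\varphi^{-1}$ and $\tilde N_{\pm,\kappa_1,\kappa_2}=N_{\kappa_1,\kappa_2}\varphi^{-1}\pm\varphi^{-1}$, regarded as elements of $\mathcal D(\mathfrak g)\otimes\mathcal D(\mathfrak g)$. Then each of them is a solution of the CYBE in $\mathcal D(\mathfrak g)$ whose symmetric part is invariant and invertible; i.e. $(\mathcal D(\mathfrak g),\tilde N_{\pm,\mu})$ and $(\mathcal D(\mathfrak g),\tilde N_{\pm,\kappa_1,\kappa_2})$ are factorizable quasitriangular Lie bialgebras.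
   Context: $\mathfrak g$ a finite-dimensional real Lie algebra; $t\in V\otimes V$ is identified with $t:V^*\to V$ via $\langle t(a),b\rangle=\langle a\otimes b,t\rangle$. $(\mathfrak g,r)$ triangular: $r$ skew-symmetric solution of the CYBE $[r_{12},r_{13}]+[r_{12},r_{23}]+[r_{13},r_{23}]=0$ (for $r=\sum a_i\otimes b_i$: $[r_{12},r_{13}]=\sum[a_i,a_j]\otimes b_i\otimes b_j$, $[r_{12},r_{23}]=\sum a_i\otimes[b_i,a_j]\otimes b_j$, $[r_{13},r_{23}]=\sum a_i\otimes a_j\otimes[b_i,b_j]$). $\langle\mathrm{ad}^*(x)a^*,y\rangle=-\langle a^*,[x,y]\rangle$; $[a^*,b^*]_\delta=\mathrm{ad}^*(r(a^* ))b^*-\mathrm{ad}^*(r(b^* ))a^*$; $\langle\mathrm{ad}^*(a^* )x,b^*\rangle=-\langle x,[a^*,b^*]_\delta\rangle$. $\mathcal D(\mathfrak g)=\mathfrak g\oplus\mathfrak g^*$ with bracket $[(x,a^* ),(y,b^* )]=([x,y]+\mathrm{ad}^*(a^* )y-\mathrm{ad}^*(b^* )x,[a^*,b^*]_\delta+\mathrm{ad}^*(x)b^*-\mathrm{ad}^*(y)a^* )$ and form $\mathfrak B_p((x,a^* ),(y,b^* ))=\langle a^*,y\rangle+\langle x,b^*\rangle$; $\varphi$ defined by $\mathfrak B_p(X,Y)=\langle\varphi(X),Y\rangle$. A quasitriangular Lie bialgebra is factorizable if the symmetric part of its $r$-matrix is invertible as a map from the dual to the algebra. *)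

(* Defs.v *)
(* Finite-dimensional Lie algebras are modelled in coordinates:
   g = 'rV[R]_n with a Lie bracket br; g^# = 'rV[R]_n with the standard pairing. *)
From HB Require Import structures.
From mathcomp Require Import all_boot all_order all_algebra.
Set Implicit Arguments. Unset Strict Implicit. Unset Printing Implicit Defensive.
Import Order.TTheory GRing.Theory Num.Theory.
Local Open Scope ring_scope.

Section Defs.
Variable R : realFieldType.

Definition e (m : nat) (i : 'I_m) : 'rV[R]_m := delta_mx 0 i.

(* pairing <x, a> between g and g^# (coordinates w.r.t. dual bases) *)
Definition pair (m : nat) (x a : 'rV[R]_m) : R := \sum_i x 0 i * a 0 i.

Definition is_lie (m : nat) (br : 'rV[R]_m -> 'rV[R]_m -> 'rV[R]_m) : Prop :=
  [/\ (forall (c : R) x y z, br (c *: x + y) z = c *: br x z + br y z),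
      (forall x y, br x y = - br y x) &
      (forall x y z, br x (br y z) + br y (br z x) + br z (br x y) = 0)].

(* t : 'M_m is the tensor sum_{p,q} t p q e_p (x) e_q; as a map V^# -> V it is
   a |-> a *m t, so that <t(a), b> = <a (x) b, t>. *)
Definition cybe (m : nat) (br : 'rV[R]_m -> 'rV[R]_m -> 'rV[R]_m) (t : 'M[R]_m)
  : Prop :=
  forall i j k : 'I_m,
    \sum_p \sum_s t p j * t s k * (br (e p) (e s)) 0 i
  + \sum_q \sum_s t i q * t s k * (br (e q) (e s)) 0 j
  + \sum_q \sum_u t i q * t j u * (br (e q) (e u)) 0 k = 0.

Definition invariant (m : nat) (br : 'rV[R]_m -> 'rV[R]_m -> 'rV[R]_m)
  (s : 'M[R]_m) : Prop :=
  forall (x : 'rV[R]_m) (i j : 'I_m),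
    \sum_p s p j * (br x (e p)) 0 i + \sum_q s i q * (br x (e q)) 0 j = 0.

Definition sympart (m : nat) (t : 'M[R]_m) : 'M[R]_m := 2^-1 *: (t + t^T).

Definition factorizable (m : nat) (br : 'rV[R]_m -> 'rV[R]_m -> 'rV[R]_m)
  (t : 'M[R]_m) : Prop :=
  [/\ cybe br t, invariant br (sympart t) & sympart t \in unitmx].

Definition tensor_of (m : nat) (f : 'rV[R]_m -> 'rV[R]_m) : 'M[R]_m :=
  \matrix_(i, j) (f (e i)) 0 j.

Variable n : nat.
Variable br : 'rV[R]_n -> 'rV[R]_n -> 'rV[R]_n.
Variable r : 'M[R]_n.

(* ad^#(x) a^# in g^#:  <ad^#(x) a^#, y> = - <a^#, [x, y]> *)
Definition coad (x a : 'rV[R]_n) : 'rV[R]_n := \row_j - pair a (br x (e j)).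

Definition brd (a b : 'rV[R]_n) : 'rV[R]_n := coad (a *m r) b - coad (b *m r) a.

(* ad^#(a^#) x in g:  <ad^#(a^#) x, b^#> = - <x, [a^#, b^#]_delta> *)
Definition coadS (a x : 'rV[R]_n) : 'rV[R]_n := \row_j - pair x (brd a (e j)).

(* D(g) = g (+) g^#, an element (x, a^#) is row_mx x a^# *)
Definition brD (X Y : 'rV[R]_(n + n)) : 'rV[R]_(n + n) :=
  let x := lsubmx X in let a := rsubmx X in
  let y := lsubmx Y in let b := rsubmx Y in
  row_mx (br x y + coadS a y - coadS b x) (brd a b + coad x b - coad y a).

Definition Bp (X Y : 'rV[R]_(n + n)) : R :=
  pair (rsubmx X) (lsubmx Y) + pair (lsubmx X) (rsubmx Y).

(* matrix of phi : D -> D^#, phi(X) = X *m Phi, <phi(X), Y> = B_p(X, Y) *)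
Definition Phi : 'M[R]_(n + n) := \matrix_(i, j) Bp (e i) (e j).

(* N_mu (x, a^#) = (x, mu r^{-1}(x) - a^#),  with r(a^#) = a^# *m r *)
Definition N_mu (mu : R) (X : 'rV[R]_(n + n)) : 'rV[R]_(n + n) :=
  row_mx (lsubmx X) (mu *: (lsubmx X *m invmx r) - rsubmx X).

Definition N_kk (k1 k2 : R) (X : 'rV[R]_(n + n)) : 'rV[R]_(n + n) :=
  row_mx (k1 *: (rsubmx X *m r) + k2 *: lsubmx X)
         (((1 - k2 ^+ 2) / k1) *: (lsubmx X *m invmx r) - k2 *: rsubmx X).

Definition tildeN (N : 'rV[R]_(n + n) -> 'rV[R]_(n + n)) (s : R)
  : 'M[R]_(n + n) :=
  tensor_of (fun a => N (a *m invmx Phi) + s *: (a *m invmx Phi)).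

End Defs.

(* Main.v *)
Require Import Defs.
From HB Require Import structures.
From mathcomp Require Import all_boot all_order all_algebra.
From Stdlib Require Import Ring.
Import Order.TTheory GRing.Theory Num.Theory.
Local Open Scope ring_scope.
Set Implicit Arguments. Unset Strict Implicit. Unset Printing Implicit Defensive.

Section Gen.
Variable R : realFieldType.
Local Notation ee := (e R).

Definition addR (x y : R) : R := x + y.
Definition mulR (x y : R) : R := x * y.
Definition oppR (x : R) : R := - x.
Definition subR (x y : R) : R := x - y.
Definition zeroR : R := 0.
Definition oneR : R := 1.
Lemma RT : @ring_theory R zeroR oneR addR mulR subR oppR eq.
Proof.
constructor; rewrite /addR /mulR /subR /oppR /zeroR /oneR => *;
 [exact: add0r|exact: addrC|exact: addrA|exact: mul1r|exact: mulrC|exact: mulrA|exact: mulrDl|by []|exact: subrr].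
Qed.
Add Ring Rring : RT.
Lemma addE (x y : R) : x + y = addR x y. Proof. by []. Qed.
Lemma mulE (x y : R) : x * y = mulR x y. Proof. by []. Qed.
Lemma oppE (x : R) : - x = oppR x. Proof. by []. Qed.
Lemma zeroE : 0 = zeroR :> R. Proof. by []. Qed.
Lemma oneE : 1 = oneR :> R. Proof. by []. Qed.
Ltac setatoms := repeat match goal with
  | |- context [@pair _ _ ?x ?y] => let a := fresh "a" in set a := @pair _ _ x y; clearbody a
  end.
Ltac rg := rewrite ?addE ?mulE ?oppE ?zeroE ?oneE; setatoms;
  match goal with |- ?x = ?y => change (@eq (Num.RealField.sort R) x y) end; ring.

Lemma use1 (a b L Rr : R) : a = b -> L - Rr = a - b -> L = Rr.
Proof. by move=> ->; rewrite subrr => /eqP; rewrite subr_eq0 => /eqP. Qed.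
Lemma use1k (k a b L Rr : R) : a = b -> L - Rr = k * (a - b) -> L = Rr.
Proof. by move=> ->; rewrite subrr mulr0 => /eqP; rewrite subr_eq0 => /eqP. Qed.
Lemma use2k (k k' a b c d L Rr : R) : a = b -> c = d -> L - Rr = k * (a - b) + k' * (c - d) -> L = Rr.
Proof. by move=> -> ->; rewrite !subrr !mulr0 addr0 => /eqP; rewrite subr_eq0 => /eqP. Qed.
Lemma use2 (a b c d L Rr : R) : a = b -> c = d -> L - Rr = (a - b) + (c - d) -> L = Rr.
Proof. by move=> -> ->; rewrite !subrr addr0 => /eqP; rewrite subr_eq0 => /eqP. Qed.

Definition linf m k (f : 'rV[R]_m -> 'rV[R]_k) :=
  forall c u v, f (c *: u + v) = c *: f u + f v.

Section Lin.
Variables (m k : nat) (f : 'rV[R]_m -> 'rV[R]_k) (Hf : linf f).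
Lemma linf0 : f 0 = 0.
Proof. have := Hf 1 0 0; rewrite !scale1r addr0 => H.
by apply: (@addrI _ (f 0)); rewrite addr0 -H. Qed.
Lemma linfD u v : f (u + v) = f u + f v.
Proof. by have := Hf 1 u v; rewrite !scale1r. Qed.
Lemma linfZ c u : f (c *: u) = c *: f u.
Proof. by have := Hf c u 0; rewrite !addr0 linf0 addr0. Qed.
Lemma linfN u : f (- u) = - f u.
Proof. by rewrite -scaleN1r linfZ scaleN1r. Qed.
Lemma linfB u v : f (u - v) = f u - f v.
Proof. by rewrite linfD linfN. Qed.
Lemma lin_expand u : f u = \sum_(i < m) u 0 i *: f (ee i).
Proof.
rewrite {1}(row_sum_delta u); elim/big_rec2: _ => [|i y1 y2 _ H].
  exact: linf0.
by rewrite Hf H.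
Qed.
End Lin.
Lemma lin_tensor m (f : 'rV[R]_m -> 'rV[R]_m) : linf f -> forall u, f u = u *m tensor_of f.
Proof.
move=> Hf u; apply/rowP=> j; rewrite (lin_expand Hf u) summxE !mxE; apply: eq_bigr => i _.
by rewrite !mxE.
Qed.

Lemma e_mul m k (i : 'I_m) (A : 'M[R]_(m, k)) j : (ee i *m A) 0 j = A i j.
Proof. by rewrite /e -rowE mxE. Qed.

Lemma tensor_ofE m (K : 'M[R]_m) f : (forall a, f a = a *m K) -> tensor_of f = K.
Proof. by move=> H; apply/matrixP=> i j; rewrite mxE H e_mul. Qed.

Section Pair.
Variable m : nat.
Implicit Types x y a b : 'rV[R]_m.
Lemma pairE x a : pair x a = (x *m a^T) 0 0.
Proof. by rewrite /pair !mxE; apply: eq_bigr => i _; rewrite mxE. Qed.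
Lemma pairC x a : pair x a = pair a x.
Proof. by rewrite /pair; apply: eq_bigr => i _; exact: mulrC. Qed.
Lemma pairDl x y a : pair (x + y) a = pair x a + pair y a.
Proof. by rewrite !pairE mulmxDl mxE. Qed.
Lemma pairZl c x a : pair (c *: x) a = c * pair x a.
Proof. by rewrite !pairE -scalemxAl mxE. Qed.
Lemma pairNl x a : pair (- x) a = - pair x a.
Proof. by rewrite !pairE mulNmx mxE. Qed.
Lemma pairBl x y a : pair (x - y) a = pair x a - pair y a.
Proof. by rewrite pairDl pairNl. Qed.
Lemma pair0l a : pair 0 a = 0.
Proof. by rewrite pairE mul0mx mxE. Qed.
Lemma pairDr x a b : pair x (a + b) = pair x a + pair x b.
Proof. by rewrite pairC pairDl !(pairC x). Qed.
Lemma pairZr c x a : pair x (c *: a) = c * pair x a.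
Proof. by rewrite pairC pairZl pairC. Qed.
Lemma pairNr x a : pair x (- a) = - pair x a.
Proof. by rewrite pairC pairNl pairC. Qed.
Lemma pairBr x a b : pair x (a - b) = pair x a - pair x b.
Proof. by rewrite pairDr pairNr. Qed.
Lemma pair0r a : pair a 0 = 0.
Proof. by rewrite pairC pair0l. Qed.
Lemma pair_e x i : pair x (ee i) = x 0 i.
Proof.
rewrite /pair (bigD1 i) //= /e mxE !eqxx mulr1 big1 ?addr0 // => j /negbTE ji.
by rewrite mxE ji andbF mulr0.
Qed.
Lemma pair_mx x (A : 'M[R]_m) y : pair (x *m A) y = pair x (y *m A^T).
Proof. by rewrite !pairE trmx_mul trmxK mulmxA. Qed.
Lemma pair_sumr x I (r : seq I) (P : pred I) (c : I -> R) (w : I -> 'rV[R]_m) :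
  pair x (\sum_(i <- r | P i) c i *: w i) = \sum_(i <- r | P i) c i * pair x (w i).
Proof.
elim/big_rec2: _ => [|i y1 y2 _ H]; first exact: pair0r.
by rewrite pairDr pairZr H.
Qed.
Lemma pair_row_lin a (F : 'rV[R]_m -> 'rV[R]_m) y : linf F ->
  pair (\row_j pair a (F (ee j))) y = pair a (F y).
Proof.
move=> HF; rewrite (lin_expand HF y) pair_sumr /pair; apply: eq_bigr => j _.
by rewrite mxE mulrC.
Qed.
End Pair.

Lemma pair_ext m (u v : 'rV[R]_m) : (forall j, pair u (ee j) = pair v (ee j)) -> u = v.
Proof. by move=> H; apply/rowP => j; rewrite -!pair_e H. Qed.

Ltac pexp := rewrite ?(pairDl, pairBl, pairNl, pairZl, pair0l).
Ltac vq := apply: pair_ext => ?; pexp; rg.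
Ltac vq1 H := let j := fresh "j" in apply: pair_ext => j;
  let H' := fresh "H" in have H' := congr1 (fun v => pair v (ee j)) H;
  rewrite /= in H'; rewrite ?(pairDl, pairBl, pairNl, pairZl, pair0l) in H'; pexp;
  first [apply: (use1 H'); rg | apply: (@use1k (- 1) _ _ _ _ H'); rg].



Section Abs.
Variables (m : nat) (B : 'rV[R]_m -> 'rV[R]_m -> 'rV[R]_m) (P M : 'M[R]_m) (s : R).
Hypothesis HBl : forall c x y z, B (c *: x + y) z = c *: B x z + B y z.
Hypothesis HBs : forall x y, B x y = - B y x.
Hypothesis HPt : P^T = P.
Hypothesis HPP : P *m P = 1%:M.
Definition bp (X Y : 'rV[R]_m) := pair (X *m P) Y.
Hypothesis Hinv : forall X Y Z, bp (B X Y) Z + bp Y (B X Z) = 0.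
Hypothesis HMs : forall X Y, bp (X *m M) Y = - bp X (Y *m M).
Hypothesis HmC : forall X Y,
  B (X *m M) (Y *m M) - (B (X *m M) Y + B X (Y *m M)) *m M = - B X Y.
Hypothesis Hs : s = 1 \/ s = -1.

Lemma BlinL z : linf (fun x => B x z). Proof. by move=> c x y; apply: HBl. Qed.
Lemma BlinR x : linf (B x).
Proof. by move=> c u v; rewrite HBs HBl opprD -scalerN -!HBs. Qed.
Lemma BDl x y z : B (x + y) z = B x z + B y z. Proof. exact: (linfD (BlinL z)). Qed.
Lemma BZl c x z : B (c *: x) z = c *: B x z. Proof. exact: (linfZ (BlinL z)). Qed.
Lemma BNl x z : B (- x) z = - B x z. Proof. exact: (linfN (BlinL z)). Qed.
Lemma BBl x y z : B (x - y) z = B x z - B y z. Proof. exact: (linfB (BlinL z)). Qed.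
Lemma BDr x y z : B z (x + y) = B z x + B z y. Proof. exact: (linfD (BlinR z)). Qed.
Lemma BZr c x z : B z (c *: x) = c *: B z x. Proof. exact: (linfZ (BlinR z)). Qed.
Lemma BNr x z : B z (- x) = - B z x. Proof. exact: (linfN (BlinR z)). Qed.
Lemma BBr x y z : B z (x - y) = B z x - B z y. Proof. exact: (linfB (BlinR z)). Qed.

Lemma B_comp u v i :
  (B u v) 0 i = \sum_p \sum_q u 0 p * v 0 q * (B (ee p) (ee q)) 0 i.
Proof.
have := lin_expand (BlinL v) u; rewrite /= => ->; rewrite summxE.
apply: eq_bigr => p _; rewrite mxE.
have := lin_expand (BlinR (ee p)) v; rewrite /= => ->; rewrite summxE mulr_sumr.
by apply: eq_bigr => q _; rewrite mxE mulrA.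
Qed.

Lemma bpC X Y : bp X Y = bp Y X.
Proof. by rewrite /bp pair_mx HPt pairC. Qed.
Lemma bpDl X Y Z : bp (X + Y) Z = bp X Z + bp Y Z.
Proof. by rewrite /bp mulmxDl pairDl. Qed.
Lemma bpBl X Y Z : bp (X - Y) Z = bp X Z - bp Y Z.
Proof. by rewrite /bp mulmxBl pairBl. Qed.
Lemma bpZl c X Z : bp (c *: X) Z = c * bp X Z.
Proof. by rewrite /bp -scalemxAl pairZl. Qed.
Lemma bpDr X Y Z : bp Z (X + Y) = bp Z X + bp Z Y.
Proof. by rewrite /bp pairDr. Qed.
Lemma bpZr c X Z : bp Z (c *: X) = c * bp Z X.
Proof. by rewrite /bp pairZr. Qed.
Lemma compE (U : 'rV[R]_m) i : U 0 i = bp U (ee i *m P).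
Proof. by rewrite /bp pair_mx HPt -mulmxA HPP mulmx1 pair_e. Qed.

Lemma MP : M *m P = - (P *m M^T).
Proof.
apply/matrixP=> i j; have := HMs (ee i) (ee j).
rewrite /bp pair_e (pairC (ee i *m P)) pair_mx pairC pair_e -!mulmxA !e_mul => H.
by rewrite H !mxE. Qed.

Lemma PM : M^T *m P = - (P *m M).
Proof.
have: P *m M = P *m M *m (P *m P) by rewrite HPP mulmx1.
rewrite mulmxA -(mulmxA P M P) MP mulmxN mulNmx mulmxA HPP mul1mx => ->.
by rewrite opprK.
Qed.

Lemma uP : P \in unitmx. Proof. by case: (mulmx1_unit HPP). Qed.
Lemma invP : invmx P = P.
Proof. by rewrite -[invmx P]mulmx1 -HPP mulmxA mulVmx ?uP // mul1mx. Qed.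

Definition tM := P *m M + s *: P.
Lemma tE : invmx P *m (M + s%:M) = tM.
Proof. by rewrite invP mulmxDr mul_mx_scalar. Qed.
Lemma tT : tM^T = s *: P - P *m M.
Proof. by rewrite /tM linearD /= linearZ /= trmx_mul HPt PM addrC. Qed.

Definition Rp (X : 'rV[R]_m) := X *m M + s *: X.
Definition Rm (X : 'rV[R]_m) := s *: X - X *m M.
Lemma etE i : ee i *m tM = Rp (ee i *m P).
Proof. by rewrite /tM mulmxDr mulmxA -scalemxAr. Qed.
Lemma etTE i : ee i *m tM^T = Rm (ee i *m P).
Proof. by rewrite tT mulmxBr mulmxA -scalemxAr. Qed.
Lemma RpD X Y : Rp (X + Y) = Rp X + Rp Y.
Proof. by apply: pair_ext=> j; rewrite /Rp mulmxDl scalerDr !pairDl; rg. Qed.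

Lemma adjR U W : bp (Rm U) W = bp U (Rp W).
Proof. by rewrite /Rm /Rp bpBl bpZl HMs bpDr bpZr; rg. Qed.


Lemma keyW X Y : B (Rp X) (Rp Y) = Rp (B (Rm Y) X) + Rp (B (Rp X) Y).
Proof.
apply: pair_ext => j.
have H := congr1 (fun v => pair v (ee j)) (HmC X Y); rewrite /= in H.
rewrite !(mulmxDl, mulmxBl, mulNmx, pairDl, pairBl, pairNl) in H.
rewrite /Rp /Rm !(BDl, BDr, BZl, BZr, BBl, BBr, BNl, BNr).
rewrite (HBs Y X) (HBs (Y *m M) X).
rewrite !(mulmxDl, mulmxBl, mulNmx, scalerN, scalerDr, scalerBr, scalerA).
rewrite -!scalemxAl !(pairDl, pairBl, pairNl, pairZl).
by case: Hs => ->; apply: (use1 H); rg.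
Qed.


Lemma cybe_tt : cybe B tM.
Proof.
move=> i j k.
have c1 : \sum_p \sum_q tM p j * tM q k * (B (ee p) (ee q)) 0 i
    = (B (ee j *m tM^T) (ee k *m tM^T)) 0 i.
  by rewrite B_comp; apply: eq_bigr => p _; apply: eq_bigr => q _; rewrite !e_mul !mxE.
have c2 : \sum_p \sum_q tM i p * tM q k * (B (ee p) (ee q)) 0 j
    = (B (ee i *m tM) (ee k *m tM^T)) 0 j.
  by rewrite B_comp; apply: eq_bigr => p _; apply: eq_bigr => q _; rewrite !e_mul !mxE.
have c3 : \sum_p \sum_q tM i p * tM j q * (B (ee p) (ee q)) 0 k
    = (B (ee i *m tM) (ee j *m tM)) 0 k.
  by rewrite B_comp; apply: eq_bigr => p _; apply: eq_bigr => q _; rewrite !e_mul.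
rewrite c1 c2 c3 !etE !etTE (compE (B _ _) i) (compE (B _ _) j) (compE (B _ _) k).
set X := ee i *m P; set Y := ee j *m P; set Z := ee k *m P.
have h1 := Hinv (Rm Y) (Rm Z) X; rewrite adjR in h1.
have h2 := Hinv (Rp X) (Rm Z) Y; rewrite adjR in h2.
rewrite (bpC (B (Rp X) (Rp Y))) keyW bpDr.
by apply: (use2 h1 h2); rg.
Qed.

Lemma symE : sympart tM = s *: P.
Proof.
rewrite /sympart tT /tM [s *: P - _]addrC addrACA subrr add0r.
by rewrite -mulr2n -scaler_nat !scalerA mulrA mulVf ?mul1r // pnatr_eq0.
Qed.

Lemma sumB2 (x v : 'rV[R]_m) i : \sum_p v 0 p * (B x (ee p)) 0 i = (B x v) 0 i.
Proof.
have := lin_expand (BlinR x) v; rewrite /= => ->; rewrite summxE.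
by apply: eq_bigr => p _; rewrite mxE.
Qed.

Lemma inv_tt : Defs.invariant B (sympart tM).
Proof.
rewrite symE => x i j.
have Ps : forall a b, P a b = P b a by move=> a b; rewrite -{1}HPt mxE.
have e1 : \sum_p (s *: P) p j * (B x (ee p)) 0 i = (B x (ee j *m (s *: P))) 0 i.
  by rewrite -sumB2; apply: eq_bigr => p _; rewrite e_mul !mxE Ps.
have e2 : \sum_q (s *: P) i q * (B x (ee q)) 0 j = (B x (ee i *m (s *: P))) 0 j.
  by rewrite -sumB2; apply: eq_bigr => q _; rewrite e_mul.
rewrite e1 e2 -!scalemxAr !BZr !mxE (compE _ i) (compE _ j).
by rewrite -mulrDr (bpC (B x (ee i *m P))) Hinv mulr0.
Qed.

Lemma unit_tt : sympart tM \in unitmx.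
Proof.
rewrite symE unitmxZ ?uP // unitfE.
by case: Hs => ->; [exact: oner_neq0 | rewrite oppr_eq0 oner_neq0].
Qed.

Lemma abs_fact : factorizable B (invmx P *m (M + s%:M)).
Proof. by rewrite tE; split; [exact: cybe_tt | exact: inv_tt | exact: unit_tt]. Qed.

End Abs.

Section Comp.
Variables (m : nat) (B : 'rV[R]_m -> 'rV[R]_m -> 'rV[R]_m).
Hypothesis HBl : forall c x y z, B (c *: x + y) z = c *: B x z + B y z.
Hypothesis HBs : forall x y, B x y = - B y x.
Lemma cybe_comp t : cybe B t -> forall i j k,
  (B (ee j *m t^T) (ee k *m t^T)) 0 i + (B (ee i *m t) (ee k *m t^T)) 0 j
  + (B (ee i *m t) (ee j *m t)) 0 k = 0.
Proof.
move=> H i j k; rewrite -(H i j k) !(B_comp HBl HBs).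
congr (_ + _ + _); apply: eq_bigr => p _; apply: eq_bigr => q _; by rewrite !e_mul ?mxE.
Qed.

Variables (N : 'rV[R]_m -> 'rV[R]_m).
Hypothesis HN : linf N.
Hypothesis HNN : forall X, N (N X) = X.
Hypothesis Hp : forall X Y, N X = X -> N Y = Y -> N (B X Y) = B X Y.
Hypothesis Hm : forall X Y, N X = - X -> N Y = - Y -> N (B X Y) = - B X Y.
Definition FF X Y := B (N X) (N Y) - N (B (N X) Y + B X (N Y)) + B X Y.
Lemma FDl X1 X2 Y : FF (X1 + X2) Y = FF X1 Y + FF X2 Y.
Proof.
rewrite /FF !(linfD HN) !(BDl HBl) !(linfD HN); vq.
Qed.
Lemma FDr X Y1 Y2 : FF X (Y1 + Y2) = FF X Y1 + FF X Y2.
Proof.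
rewrite /FF !(linfD HN) !(BDr HBl HBs) !(linfD HN); vq.
Qed.
Lemma Fpp X Y : N X = X -> N Y = Y -> FF X Y = 0.
Proof. move=> hX hY; rewrite /FF hX hY (linfD HN) Hp //; vq. Qed.
Lemma Fmm X Y : N X = - X -> N Y = - Y -> FF X Y = 0.
Proof. move=> hX hY; rewrite /FF hX hY (BNl HBl) (BNr HBl HBs) (BNl HBl) (linfD HN) !(linfN HN) Hm //; vq. Qed.
Lemma Fpm X Y : N X = X -> N Y = - Y -> FF X Y = 0.
Proof. move=> hX hY; rewrite /FF hX hY (BNr HBl HBs) subrr (linf0 HN); vq. Qed.
Lemma Fmp X Y : N X = - X -> N Y = Y -> FF X Y = 0.
Proof. move=> hX hY; rewrite /FF hX hY (BNl HBl) addNr (linf0 HN); vq. Qed.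
Lemma decomp X : X = 2^-1 *: (X + N X) + 2^-1 *: (X - N X).
Proof.
rewrite -scalerDr addrACA subrr addr0 -mulr2n -scaler_nat scalerA.
by rewrite mulVf ?scale1r // pnatr_eq0.
Qed.
Lemma Npart X : N (2^-1 *: (X + N X)) = 2^-1 *: (X + N X).
Proof. by rewrite (linfZ HN) (linfD HN) HNN addrC. Qed.
Lemma Nmpart X : N (2^-1 *: (X - N X)) = - (2^-1 *: (X - N X)).
Proof. by rewrite (linfZ HN) (linfB HN) HNN -scalerN opprB. Qed.
Lemma mcybe X Y : B (N X) (N Y) - N (B (N X) Y + B X (N Y)) = - B X Y.
Proof.
suff : FF X Y = 0 by rewrite /FF => /eqP; rewrite addr_eq0 => /eqP.
rewrite (decomp X) (decomp Y) !FDl !FDr.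
rewrite Fpp ?Npart // Fpm ?Npart ?Nmpart // Fmp ?Npart ?Nmpart //.
by rewrite Fmm ?Nmpart // !addr0.
Qed.
End Comp.

Section Conc.
Variables (n : nat) (br : 'rV[R]_n -> 'rV[R]_n -> 'rV[R]_n) (r : 'M[R]_n).
Hypothesis HbrL : forall c x y z, br (c *: x + y) z = c *: br x z + br y z.
Hypothesis HbrS : forall x y, br x y = - br y x.
Hypothesis Hr : r^T = - r.
Hypothesis Hcy : cybe br r.
Hypothesis Hu : r \in unitmx.
Implicit Types x y z a b c : 'rV[R]_n.
Local Notation rho x := (x *m invmx r).

Lemma rhoK x : rho x *m r = x. Proof. exact: mulmxKV. Qed.
Lemma rhoK' x : rho (x *m r) = x. Proof. exact: mulmxK. Qed.
Lemma rhoT : (invmx r)^T = - invmx r.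
Proof.
rewrite trmx_inv Hr -scaleN1r invmxZ ?invrN1 ?scaleN1r //.
by rewrite -scaleN1r unitmxZ // unitrN1.
Qed.
Lemma pair_rho x y : pair (rho x) y = - pair x (rho y).
Proof. by rewrite pair_mx rhoT mulmxN pairNr. Qed.
Lemma pair_r x y : pair (x *m r) y = - pair x (y *m r).
Proof. by rewrite pair_mx Hr mulmxN pairNr. Qed.

Lemma brDl x y z : br (x + y) z = br x z + br y z. Proof. exact: BDl. Qed.
Lemma brZl k x z : br (k *: x) z = k *: br x z. Proof. exact: BZl. Qed.
Lemma brNl x z : br (- x) z = - br x z. Proof. exact: BNl. Qed.
Lemma brBl x y z : br (x - y) z = br x z - br y z. Proof. exact: BBl. Qed.
Lemma brDr x y z : br z (x + y) = br z x + br z y. Proof. exact: BDr. Qed.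
Lemma brZr k x z : br z (k *: x) = k *: br z x. Proof. exact: BZr. Qed.
Lemma brNr x z : br z (- x) = - br z x. Proof. exact: BNr. Qed.
Lemma brBr x y z : br z (x - y) = br z x - br z y. Proof. exact: BBr. Qed.
Lemma br0l z : br 0 z = 0. Proof. exact: (linf0 (BlinL HbrL z)). Qed.
Lemma br0r z : br z 0 = 0. Proof. exact: (linf0 (BlinR HbrL HbrS z)). Qed.

Local Notation cd := (coad br).
Lemma coad_linx a : linf (fun x => cd x a).
Proof. by move=> k x y; apply/rowP=> j; rewrite /coad !mxE HbrL pairDr pairZr; rg. Qed.
Lemma coad_lina x : linf (cd x).
Proof. by move=> k a b; apply/rowP=> j; rewrite /coad !mxE pairDl pairZl; rg. Qed.
Lemma coadDx x y a : cd (x + y) a = cd x a + cd y a. Proof. exact: (linfD (coad_linx a)). Qed.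
Lemma coadZx k x a : cd (k *: x) a = k *: cd x a. Proof. exact: (linfZ (coad_linx a)). Qed.
Lemma coadNx x a : cd (- x) a = - cd x a. Proof. exact: (linfN (coad_linx a)). Qed.
Lemma coad0x a : cd 0 a = 0. Proof. exact: (linf0 (coad_linx a)). Qed.
Lemma coadDa x a b : cd x (a + b) = cd x a + cd x b. Proof. exact: (linfD (coad_lina x)). Qed.
Lemma coadZa k x a : cd x (k *: a) = k *: cd x a. Proof. exact: (linfZ (coad_lina x)). Qed.
Lemma coadNa x a : cd x (- a) = - cd x a. Proof. exact: (linfN (coad_lina x)). Qed.
Lemma coadx0 x : cd x 0 = 0. Proof. exact: (linf0 (coad_lina x)). Qed.
Lemma coadP x a y : pair (cd x a) y = - pair a (br x y).
Proof.
have -> : cd x a = - \row_j pair a (br x (ee j)) by apply/rowP=> j; rewrite !mxE.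
by rewrite pairNl pair_row_lin //; exact: (BlinR HbrL HbrS x).
Qed.
Lemma coadP' x a y : pair y (cd x a) = - pair a (br x y).
Proof. by rewrite pairC coadP. Qed.

Local Notation bd := (brd br r).
Lemma brd_lin1 b : linf (fun a => bd a b).
Proof.
move=> k a a'; rewrite /brd mulmxDl -scalemxAl coadDx coadZx coadDa coadZa; vq.
Qed.
Lemma brdS a b : bd a b = - bd b a. Proof. by rewrite /brd opprB. Qed.
Lemma brd_lin2 a : linf (bd a).
Proof. by move=> k b b'; rewrite brdS (brd_lin1 a) (brdS a b) (brdS a b'); vq. Qed.
Lemma brdDl a a' b : bd (a + a') b = bd a b + bd a' b. Proof. exact: (linfD (brd_lin1 b)). Qed.
Lemma brdZl k a b : bd (k *: a) b = k *: bd a b. Proof. exact: (linfZ (brd_lin1 b)). Qed.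
Lemma brd0l b : bd 0 b = 0. Proof. exact: (linf0 (brd_lin1 b)). Qed.
Lemma brdDr a b b' : bd a (b + b') = bd a b + bd a b'. Proof. exact: (linfD (brd_lin2 a)). Qed.
Lemma brdZr k a b : bd a (k *: b) = k *: bd a b. Proof. exact: (linfZ (brd_lin2 a)). Qed.

Local Notation cS := (coadS br r).
Lemma coadS_lina x : linf (fun a => cS a x).
Proof. by move=> k a b; apply/rowP=> j; rewrite /coadS !mxE brdDl brdZl pairDr pairZr; rg. Qed.
Lemma coadS_linx a : linf (cS a).
Proof. by move=> k x y; apply/rowP=> j; rewrite /coadS !mxE pairDl pairZl; rg. Qed.
Lemma coadSDa a b x : cS (a + b) x = cS a x + cS b x. Proof. exact: (linfD (coadS_lina x)). Qed.
Lemma coadSZa k a x : cS (k *: a) x = k *: cS a x. Proof. exact: (linfZ (coadS_lina x)). Qed.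
Lemma coadS0a x : cS 0 x = 0. Proof. exact: (linf0 (coadS_lina x)). Qed.
Lemma coadSDx a x y : cS a (x + y) = cS a x + cS a y. Proof. exact: (linfD (coadS_linx a)). Qed.
Lemma coadSZx k a x : cS a (k *: x) = k *: cS a x. Proof. exact: (linfZ (coadS_linx a)). Qed.
Lemma coadSx0 a : cS a 0 = 0. Proof. exact: (linf0 (coadS_linx a)). Qed.
Lemma coadSP a x b : pair (cS a x) b = - pair x (bd a b).
Proof.
have -> : cS a x = - \row_j pair x (bd a (ee j)) by apply/rowP=> j; rewrite !mxE.
by rewrite pairNl pair_row_lin //; exact: brd_lin2.
Qed.
Lemma coadSP' a x b : pair b (cS a x) = - pair x (bd a b).
Proof. by rewrite pairC coadSP. Qed.


Local Notation BD := (brD br r).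
Lemma brD_lin1 k X Y Z : BD (k *: X + Y) Z = k *: BD X Z + BD Y Z.
Proof.
rewrite /brD /= !linearP /= scale_row_mx add_row_mx; congr row_mx.
  rewrite HbrL coadSDa coadSZa coadSDx coadSZx; vq.
rewrite brdDl brdZl coadDx coadZx coadDa coadZa; vq.
Qed.
Lemma brD_skew X Y : BD X Y = - BD Y X.
Proof.
rewrite /brD /= opp_row_mx; congr row_mx.
  rewrite (HbrS (lsubmx X)); vq.
rewrite (brdS (rsubmx X)); vq.
Qed.

Definition swap (X : 'rV[R]_(n + n)) := row_mx (rsubmx X) (lsubmx X).
Lemma swap_lin : linf swap.
Proof. by move=> k u v; rewrite /swap !linearP /= scale_row_mx add_row_mx. Qed.
Lemma swapK X : swap (swap X) = X.
Proof. by rewrite /swap row_mxKl row_mxKr hsubmxK. Qed.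
Lemma pair_split (u v : 'rV[R]_(n + n)) :
  pair u v = pair (lsubmx u) (lsubmx v) + pair (rsubmx u) (rsubmx v).
Proof. by rewrite /pair big_split_ord /=; congr (_ + _); apply: eq_bigr => i _; rewrite !mxE. Qed.
Lemma BpE X Y : Bp X Y = pair (swap X) Y.
Proof. by rewrite /Bp pair_split /swap row_mxKl row_mxKr. Qed.
Lemma PhiE : Phi R n = tensor_of swap.
Proof. by apply/matrixP => i j; rewrite [LHS]mxE [RHS]mxE BpE pair_e. Qed.
Lemma mulPhi X : X *m Phi R n = swap X.
Proof. by rewrite PhiE -(lin_tensor swap_lin). Qed.
Lemma PhiT : (Phi R n)^T = Phi R n.
Proof. by apply/matrixP => i j; rewrite !mxE /Bp addrC; congr (_ + _); exact: pairC. Qed.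
Lemma PhiPhi : Phi R n *m Phi R n = 1%:M.
Proof. by apply/row_matrixP => i; rewrite row_mul rowE !mulPhi swapK rowE mulmx1. Qed.

Lemma invD X Y Z : bp (Phi R n) (BD X Y) Z + bp (Phi R n) Y (BD X Z) = 0.
Proof.
rewrite /bp !mulPhi -!BpE /Bp /brD; cbv zeta; rewrite !row_mxKl !row_mxKr.
set x := lsubmx X; set a := rsubmx X; set y := lsubmx Y; set b := rsubmx Y.
set z := lsubmx Z; set c := rsubmx Z.
rewrite !(pairDl, pairBl, pairDr, pairBr, pairNl, pairNr) !(coadP, coadP', coadSP, coadSP').
rewrite /brd !(pairDl, pairBl, pairDr, pairBr, pairNl, pairNr) !(coadP, coadP').
rewrite ![pair (br _ _) _]pairC (HbrS z y) pairNr; rg.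
Qed.


Lemma lin0s (g : 'rV[R]_n -> R) : (forall k u v, g (k *: u + v) = k * g u + g v) ->
  (forall i, g (ee i) = 0) -> forall u, g u = 0.
Proof.
move=> Hg He u; have g0 : g 0 = 0.
  by have := Hg 1 0 0; rewrite scale1r addr0 mul1r => H; apply: (@addrI _ (g 0)); rewrite addr0 -H.
rewrite (row_sum_delta u); elim/big_rec: _ => [//|i x _ Hx].
by rewrite Hg Hx addr0; have := He i; rewrite /e => ->; rewrite mulr0.
Qed.

Definition TT a b c := pair (br (b *m r) (c *m r)) a - pair (br (a *m r) (c *m r)) b
  + pair (br (a *m r) (b *m r)) c.
Lemma TTe i j k : TT (ee i) (ee j) (ee k) = 0.
Proof.
have := cybe_comp HbrL HbrS Hcy i j k.
by rewrite Hr !mulmxN !(brNl, brNr) opprK !mxE /TT !pair_e.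
Qed.
Ltac tlin := rewrite /TT ?(mulmxDl, mulmxBl) -?scalemxAl
  ?(pairDl, pairDr, pairZl, pairZr, brDl, brDr, brZl, brZr, pairDl, pairDr, pairZl, pairZr); rg.
Lemma TT1 k a a' b c : TT (k *: a + a') b c = k * TT a b c + TT a' b c. Proof. tlin. Qed.
Lemma TT2 k a b b' c : TT a (k *: b + b') c = k * TT a b c + TT a b' c. Proof. tlin. Qed.
Lemma TT3 k a b c c' : TT a b (k *: c + c') = k * TT a b c + TT a b c'. Proof. tlin. Qed.
Lemma TT0 a b c : TT a b c = 0.
Proof.
have h1 : forall i j w, TT (ee i) (ee j) w = 0.
  by move=> i j; apply: (lin0s (g := fun w => TT (ee i) (ee j) w)) => [k u v|k]; [exact: TT3|exact: TTe].
have h2 : forall i v w, TT (ee i) v w = 0.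
  by move=> i v w; apply: (lin0s (g := fun v => TT (ee i) v w)) => [k u u'|j]; [exact: TT2|exact: h1].
by apply: (lin0s (g := fun a => TT a b c)) => [k u v|i]; [exact: TT1|exact: h2].
Qed.
Lemma cocyc x y w :
  pair (br y w) (rho x) - pair (br x w) (rho y) + pair (br x y) (rho w) = 0.
Proof. by have := TT0 (rho x) (rho y) (rho w); rewrite /TT !rhoK. Qed.

Lemma I3 x y : cd x (rho y) - cd y (rho x) = rho (br x y).
Proof.
apply: pair_ext => j; have H := cocyc x y (ee j).
rewrite pairBl !coadP ![pair (rho _) (br _ _)]pairC pair_rho.
by apply: (use1 H); rg.
Qed.

Lemma Jid a y : cS a y = br (a *m r) y + cd y a *m r.
Proof.
apply: pair_ext => j.
rewrite coadSP /brd pairBr !coadP' pairDl pair_r coadP ![pair (br _ _) _]pairC (HbrS y) pairNr.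
rg.
Qed.

Lemma I1 x y : cS (rho x) y - cS (rho y) x = br x y.
Proof.
rewrite !Jid !rhoK (HbrS y x).
have h : cd x (rho y) *m r - cd y (rho x) *m r = br x y by rewrite -mulmxBl I3 rhoK.
vq1 h.
Qed.

Lemma clos k x y : BD (row_mx x (k *: rho x)) (row_mx y (k *: rho y))
  = row_mx ((1 + k) *: br x y) (k *: rho ((1 + k) *: br x y)).
Proof.
rewrite /brD; cbv zeta; rewrite !row_mxKl !row_mxKr; congr row_mx.
  rewrite !coadSZa; have h := congr1 (fun v => k *: v) (I1 x y); rewrite /= in h.
  vq1 h.
have hb : bd (rho x) (rho y) = rho (br x y) by rewrite /brd !rhoK I3.
rewrite brdZl brdZr hb !coadZa -!scalemxAl.
have h := congr1 (fun v => k *: v) (I3 x y); rewrite /= in h.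
vq1 h.
Qed.

Lemma vhalf m (v : 'rV[R]_m) : v = - v -> v = 0.
Proof.
move/eqP; rewrite -subr_eq0 opprK -mulr2n -scaler_nat scaler_eq0 pnatr_eq0 /=.
by move/eqP.
Qed.

Lemma tildeNE (N : 'rV[R]_(n + n) -> 'rV[R]_(n + n)) s : linf N ->
  tildeN N s = invmx (Phi R n) *m (tensor_of N + s%:M).
Proof.
move=> HN; apply: tensor_ofE => a.
by rewrite !mulmxDr mul_mx_scalar mulmxA -scalemxAr -(lin_tensor HN).
Qed.

Lemma fact_of (N : 'rV[R]_(n + n) -> 'rV[R]_(n + n)) s : linf N -> (s = 1 \/ s = -1) ->
  (forall X, N (N X) = X) ->
  (forall X Y, N X = X -> N Y = Y -> N (BD X Y) = BD X Y) ->
  (forall X Y, N X = - X -> N Y = - Y -> N (BD X Y) = - BD X Y) ->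
  (forall X Y, Bp (N X) Y = - Bp X (N Y)) ->
  factorizable BD (tildeN N s).
Proof.
move=> HN Hs HNN Hp Hm Hsk; rewrite tildeNE //.
apply: (abs_fact (B := BD) (P := Phi R n) (M := tensor_of N) (s := s)).
- exact: brD_lin1.
- exact: brD_skew.
- exact: PhiT.
- exact: PhiPhi.
- exact: invD.
- by move=> X Y; rewrite -!(lin_tensor HN) /bp !mulPhi -!BpE.
- move=> X Y; rewrite -!(lin_tensor HN).
  exact: (mcybe brD_lin1 brD_skew HN HNN Hp Hm).
- exact: Hs.
Qed.


Lemma half_v m (v : 'rV[R]_m) : v = 2^-1 *: (v + v).
Proof. by rewrite -mulr2n -scaler_nat scalerA mulVf ?scale1r // pnatr_eq0. Qed.

Section Mu.
Variable mu : R.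
Local Notation Nm := (N_mu r mu).
Lemma Nm_lin : linf Nm.
Proof.
move=> k X Y; rewrite /N_mu !linearP /= scale_row_mx add_row_mx.
by congr row_mx; rewrite ?mulmxDl -?scalemxAl; vq.
Qed.
Lemma Nm_inv X : Nm (Nm X) = X.
Proof. rewrite /N_mu row_mxKl row_mxKr -[RHS]hsubmxK; congr row_mx; vq. Qed.
Lemma Nm_skew X Y : Bp (Nm X) Y = - Bp X (Nm Y).
Proof.
rewrite /Bp /N_mu !row_mxKl !row_mxKr !(pairBl, pairZl, pairBr, pairZr) pair_rho; rg.
Qed.
Definition cm := mu / 2%:R.
Lemma cm2 : cm + cm = mu.
Proof. by rewrite /cm -splitr. Qed.
Lemma Nm_form X : Nm X = X -> X = row_mx (lsubmx X) (cm *: rho (lsubmx X)).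
Proof.
move=> H; rewrite -{1}(hsubmxK X); congr row_mx.
have h := congr1 rsubmx H; rewrite /N_mu row_mxKr in h.
have h2 : rsubmx X + rsubmx X = mu *: rho (lsubmx X) by rewrite -[X in X + _]h subrK.
by rewrite [LHS]half_v h2 scalerA mulrC.
Qed.
Lemma Nm_diag z : Nm (row_mx z (cm *: rho z)) = row_mx z (cm *: rho z).
Proof.
rewrite /N_mu row_mxKl row_mxKr; congr row_mx.
by rewrite -scalerBl -{1}cm2 addrK.
Qed.
Lemma Nm_p X Y : Nm X = X -> Nm Y = Y -> Nm (BD X Y) = BD X Y.
Proof. by move=> hX hY; rewrite (Nm_form hX) (Nm_form hY) clos Nm_diag. Qed.
Lemma Nm_m X Y : Nm X = - X -> Nm Y = - Y -> Nm (BD X Y) = - BD X Y.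
Proof.
move=> hX hY.
have f : forall Z, Nm Z = - Z -> Z = row_mx 0 (rsubmx Z).
  move=> Z hZ; have h := congr1 lsubmx hZ; rewrite /N_mu row_mxKl linearN /= in h.
  by rewrite -{1}(hsubmxK Z) (vhalf h).
rewrite (f X hX) (f Y hY).
have hb : forall a b, BD (row_mx 0 a) (row_mx 0 b) = row_mx 0 (bd a b).
  move=> a b; rewrite /brD; cbv zeta; rewrite !row_mxKl !row_mxKr br0l !coadSx0 !coad0x.
  by rewrite !(addr0, subr0).
by rewrite hb /N_mu row_mxKl row_mxKr mul0mx scaler0 sub0r opp_row_mx oppr0.
Qed.
Lemma fact_mu s : (s = 1 \/ s = -1) -> factorizable BD (tildeN Nm s).
Proof. move=> Hs; exact: (fact_of Nm_lin Hs Nm_inv Nm_p Nm_m Nm_skew). Qed.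
End Mu.

Section Kk.
Variables k1 k2 : R.
Hypothesis Hk1 : k1 != 0.
Local Notation Nk := (N_kk r k1 k2).
Lemma hk : k1 * k1^-1 = 1. Proof. exact: mulfV. Qed.
Lemma Nk_lin : linf Nk.
Proof.
move=> k X Y; rewrite /N_kk !linearP /= scale_row_mx add_row_mx.
by congr row_mx; rewrite ?mulmxDl -?scalemxAl; vq.
Qed.
Lemma Nk_inv X : Nk (Nk X) = X.
Proof.
rewrite /N_kk row_mxKl row_mxKr -[RHS]hsubmxK; congr row_mx.
  rewrite mulmxBl -!scalemxAl rhoK; apply: pair_ext => j; pexp; rewrite expr2.
  by apply: (@use1k (pair (lsubmx X) (ee j) * (1 - k2 * k2)) _ _ _ _ hk); rg.
rewrite mulmxDl -!scalemxAl rhoK'; apply: pair_ext => j; pexp; rewrite expr2.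
by apply: (@use1k (pair (rsubmx X) (ee j) * (1 - k2 * k2)) _ _ _ _ hk); rg.
Qed.
Lemma Nk_skew X Y : Bp (Nk X) Y = - Bp X (Nk Y).
Proof.
rewrite /Bp /N_kk !row_mxKl !row_mxKr.
rewrite !(pairDl, pairBl, pairNl, pairZl, pairDr, pairBr, pairNr, pairZr) pair_rho pair_r expr2; rg.
Qed.
Definition cl (l : R) := (l - k2) / k1.
Lemma Nk_form l X : Nk X = l *: X -> X = row_mx (lsubmx X) (cl l *: rho (lsubmx X)).
Proof.
move=> H; rewrite -{1}(hsubmxK X); congr row_mx.
have h := congr1 lsubmx H; rewrite /N_kk row_mxKl linearZ /= in h.
have h1 : rsubmx X *m r = cl l *: lsubmx X.
  apply: pair_ext => j; have h' := congr1 (fun v => pair v (ee j)) h.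
  rewrite /= !(pairDl, pairZl) in h'; pexp; rewrite /cl.
  by apply: (@use2k (k1^-1) (- pair (rsubmx X *m r) (ee j)) _ _ _ _ _ _ h' hk); rg.
by rewrite -(rhoK' (rsubmx X)) h1 -scalemxAl.
Qed.
Lemma Nk_diag l z : (l = 1 \/ l = -1) ->
  Nk (row_mx z (cl l *: rho z)) = l *: row_mx z (cl l *: rho z).
Proof.
move=> hl; rewrite /N_kk row_mxKl row_mxKr scale_row_mx /cl; congr row_mx.
  rewrite -scalemxAl rhoK; apply: pair_ext => j; pexp.
  by apply: (@use1k (pair z (ee j) * (l - k2)) _ _ _ _ hk); rg.
apply: pair_ext => j; pexp; rewrite expr2.
by case: hl => ->; rg.
Qed.
Lemma Nk_eig l X Y : (l = 1 \/ l = -1) -> Nk X = l *: X -> Nk Y = l *: Y ->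
  Nk (BD X Y) = l *: BD X Y.
Proof. by move=> hl hX hY; rewrite (Nk_form hX) (Nk_form hY) clos Nk_diag. Qed.
Lemma Nk_p X Y : Nk X = X -> Nk Y = Y -> Nk (BD X Y) = BD X Y.
Proof.
move=> hX hY; have := @Nk_eig 1 X Y (or_introl erefl); rewrite !scale1r; exact.
Qed.
Lemma Nk_m X Y : Nk X = - X -> Nk Y = - Y -> Nk (BD X Y) = - BD X Y.
Proof.
move=> hX hY; have := @Nk_eig (-1) X Y (or_intror erefl); rewrite !scaleN1r; exact.
Qed.
Lemma fact_kk s : (s = 1 \/ s = -1) -> factorizable BD (tildeN Nk s).
Proof. move=> Hs; exact: (fact_of Nk_lin Hs Nk_inv Nk_p Nk_m Nk_skew). Qed.
End Kk.

End Conc.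
End Gen.

Unset Implicit Arguments. Set Strict Implicit. Set Printing Implicit Defensive.

Theorem proposition4p10 (R : realFieldType) (n : nat)
  (br : 'rV[R]_n -> 'rV[R]_n -> 'rV[R]_n) (r : 'M[R]_n) :
  is_lie br -> r^T = - r -> cybe br r -> r \in unitmx ->
  (forall mu s : R, (s = 1 \/ s = -1) ->
     factorizable (brD br r) (tildeN (N_mu r mu) s)) /\
  (forall k1 k2 s : R, k1 != 0 -> k2 ^+ 2 != 1 -> (s = 1 \/ s = -1) ->
     factorizable (brD br r) (tildeN (N_kk r k1 k2) s)).
Proof.
move=> [HbrL HbrS _] Hr Hcy Hu; split.
  by move=> mu s Hs; apply: fact_mu.
by move=> k1 k2 s Hk1 _ Hs; apply: fact_kk.
Qed.
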